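(* Let $\Omega$ be a set, and let $G\le\mathrm{Sym}(\Omega)$ be block-faithful and $k$-by-block-transitive on $\Omega$ relative to an equivalence relation $\sim$ that is nontrivial (some class has more than one element), for some $k\ge 2$. Let $N$ be a nontrivial normal subgroup of $G$. Then $G = N G(\omega)$ for every $\omega\in\Omega$. In particular, $N$ is not abelian.
   Context: Blocks are $\sim$-classes; $G(\omega)$ is the stabilizer of $\omega$. $\Omega^{[k]}$ is the set of $k$-tuples no two entries of which lie in the same block. $G$ is $k$-by-block-transitive if $\sim$ is $G$-invariant, there are at least $k$ blocks, and $G$ is transitive on $\Omega^{[k]}$; it is block-faithful if it acts faithfully on the set of blocks. *)

(* Defs.v *)
(* Permutation groups on an arbitrary (possibly infinite) set
   Omega, modelled as a type T; group elements are functions T -> T. *)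
From Stdlib Require Import Arith.

Definition comp {T : Type} (f g : T -> T) : T -> T := fun x => f (g x).

Definition inverse_of {T : Type} (g g' : T -> T) : Prop :=
  (forall x, g (g' x) = x) /\ (forall x, g' (g x) = x).

(* G is a subgroup of Sym(T): contains id, closed under composition and
   inverses (so every element is a bijection). *)
Definition perm_group {T : Type} (G : (T -> T) -> Prop) : Prop :=
  G (fun x => x) /\
  (forall f g, G f -> G g -> G (comp f g)) /\
  (forall f, G f -> exists f', G f' /\ inverse_of f f').

Definition subgroup {T : Type} (N G : (T -> T) -> Prop) : Prop :=
  perm_group N /\ (forall n, N n -> G n).

Definition normal_subgroup {T : Type} (N G : (T -> T) -> Prop) : Prop :=
  subgroup N G /\
  (forall g g' n, G g -> inverse_of g g' -> N n -> N (comp g (comp n g'))).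

Definition equivalence {T : Type} (sim : T -> T -> Prop) : Prop :=
  (forall x, sim x x) /\ (forall x y, sim x y -> sim y x) /\
  (forall x y z, sim x y -> sim y z -> sim x z).

Definition invariant {T : Type} (G : (T -> T) -> Prop) (sim : T -> T -> Prop) :=
  forall g, G g -> forall x y, sim x y <-> sim (g x) (g y).

(* Omega^[k]: k-tuples (indexed by 0..k-1) with no two entries in the same block *)
Definition in_Omega_k {T : Type} (sim : T -> T -> Prop) (k : nat) (t : nat -> T) :=
  forall i j, i < k -> j < k -> i <> j -> ~ sim (t i) (t j).

Definition at_least_k_blocks {T : Type} (sim : T -> T -> Prop) (k : nat) :=
  exists t, in_Omega_k sim k t.

Definition k_by_block_transitive {T : Type} (G : (T -> T) -> Prop)
  (sim : T -> T -> Prop) (k : nat) : Prop :=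
  invariant G sim /\ at_least_k_blocks sim k /\
  (forall t u, in_Omega_k sim k t -> in_Omega_k sim k u ->
     exists g, G g /\ forall i, i < k -> g (t i) = u i).

(* the action on the set of blocks is faithful: an element fixing every
   block is the identity *)
Definition block_faithful {T : Type} (G : (T -> T) -> Prop) (sim : T -> T -> Prop) :=
  forall g, G g -> (forall x, sim (g x) x) -> forall x, g x = x.

Definition nontrivial_equiv {T : Type} (sim : T -> T -> Prop) :=
  exists x y, x <> y /\ sim x y.

Definition nontrivial_group {T : Type} (N : (T -> T) -> Prop) :=
  exists n, N n /\ exists x, n x <> x.

Definition abelian_group {T : Type} (N : (T -> T) -> Prop) :=
  forall a b, N a -> N b -> forall x, a (b x) = b (a x).

(* Main.v *)
Require Import Defs.
From Stdlib Require Import Arith Lia Classical.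

Lemma ext_tuple (T : Type) (sim : T -> T -> Prop) (k : nat) (t : nat -> T) (j : nat) (a : T) :
  equivalence sim -> in_Omega_k sim k t -> j < k ->
  exists u, in_Omega_k sim k u /\ u j = a /\
    forall i, i < k -> i <> j -> ~ sim (t i) a -> u i = t i.
Proof.
  intros [Hr [Hs Htr]] Ht Hj.
  destruct (classic (exists m, m < k /\ sim a (t m))) as [[m [Hm Ham]]|Hno].
  - exists (fun i => if i =? j then a else if i =? m then t j else t i).
    split; [|split].
    + intros i i' Hi Hi' Hii'.
      destruct (Nat.eqb_spec i j); destruct (Nat.eqb_spec i' j);
      destruct (Nat.eqb_spec i m); destruct (Nat.eqb_spec i' m); subst; try lia;
      intro H.
      all: try (apply (Ht m j); [lia|lia|lia|]; eauto; fail).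
      all: try (apply (Ht j m); [lia|lia|lia|]; eauto; fail).
      all: try (apply (Ht m i'); [lia|lia|lia|]; eauto; fail).
      all: try (apply (Ht i m); [lia|lia|lia|]; eauto; fail).
      all: try (apply (Ht j i'); [lia|lia|lia|]; eauto; fail).
      all: try (apply (Ht i j); [lia|lia|lia|]; eauto; fail).
      all: try (apply (Ht i i'); [lia|lia|lia|]; eauto; fail).
    + rewrite Nat.eqb_refl; reflexivity.
    + intros i Hi Hij Hn.
      destruct (Nat.eqb_spec i j); [lia|].
      destruct (Nat.eqb_spec i m); [subst; exfalso; eauto|reflexivity].
  - exists (fun i => if i =? j then a else t i).
    split; [|split].
    + intros i i' Hi Hi' Hii'.
      destruct (Nat.eqb_spec i j); destruct (Nat.eqb_spec i' j); subst; try lia;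
      intro H.
      * apply Hno; exists i'; eauto.
      * apply Hno; exists i; eauto.
      * apply (Ht i i'); auto.
    + rewrite Nat.eqb_refl; reflexivity.
    + intros i Hi Hij Hn.
      destruct (Nat.eqb_spec i j); [lia|reflexivity].
Qed.

Lemma pair_tuple (T : Type) (sim : T -> T -> Prop) (k : nat) (t : nat -> T) (a b : T) :
  equivalence sim -> in_Omega_k sim k t -> 2 <= k -> ~ sim a b ->
  exists u, in_Omega_k sim k u /\ u 0 = a /\ u 1 = b.
Proof.
  intros He Ht Hk Hab.
  destruct (ext_tuple T sim k t 0 a He Ht ltac:(lia)) as [u [Hu [Hu0 _]]].
  destruct (ext_tuple T sim k u 1 b He Hu ltac:(lia)) as [v [Hv [Hv1 Hv2]]].
  exists v; split; [exact Hv|split; [|exact Hv1]].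
  rewrite Hv2; try lia; rewrite Hu0; auto.
Qed.

Theorem corollary2p4 (T : Type) (G N : (T -> T) -> Prop) (sim : T -> T -> Prop)
  (k : nat) :
  perm_group G -> equivalence sim -> nontrivial_equiv sim -> 2 <= k ->
  block_faithful G sim -> k_by_block_transitive G sim k ->
  normal_subgroup N G -> nontrivial_group N ->
  (forall w : T, forall g, G g ->
     exists n h, N n /\ G h /\ h w = w /\ forall x, g x = n (h x)) /\
  ~ abelian_group N.
Proof.
  intros HG He Hnt Hk Hbf [Hinv [[t Ht] Htr]] [[HN HNG] Hnorm] [n [Nn [x Hx]]].
  pose proof He as [Hr [Hs Ht3]].
  destruct HG as [HG1 [HGc HGi]]. pose proof HN as [HN1 [HNc HNi]].
  assert (Hx0 : exists x0, ~ sim (n x0) x0).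
  { apply NNPP; intro H. apply Hx. apply (Hbf n (HNG n Nn)).
    intro z. apply NNPP; intro H'. apply H; exists z; exact H'. }
  destruct Hx0 as [y Hy].
  assert (Step2 : forall a b, ~ sim a b -> exists m, N m /\ m a = b).
  { intros a b Hab.
    destruct (pair_tuple T sim k t y (n y) He Ht Hk ltac:(eauto)) as [w [Hw [Hw0 Hw1]]].
    destruct (pair_tuple T sim k t a b He Ht Hk Hab) as [v [Hv [Hv0 Hv1]]].
    destruct (Htr w v Hw Hv) as [g [Gg Hg]].
    destruct (HGi g Gg) as [g' [Gg' [Hgg' Hg'g]]].
    exists (comp g (comp n g')). split.
    - apply Hnorm; auto. split; auto.
    - unfold comp. rewrite <- Hv0, <- (Hg 0) by lia.
      rewrite Hg'g, Hw0, <- Hv1, <- (Hg 1) by lia. rewrite Hw1. reflexivity. }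
  assert (Step3 : forall a b, exists m, N m /\ m a = b).
  { intros a b.
    destruct (classic (sim a b)) as [Hab|Hab]; [|now apply Step2].
    assert (Hc : exists c, ~ sim a c).
    { assert (H01 : ~ sim (t 0) (t 1)) by (apply Ht; lia).
      destruct (classic (sim a (t 0))).
      - exists (t 1). intro; apply H01; eauto.
      - exists (t 0); auto. }
    destruct Hc as [c Hac].
    destruct (Step2 a c Hac) as [m1 [Nm1 Hm1]].
    destruct (Step2 c b ltac:(intro; apply Hac; eauto)) as [m2 [Nm2 Hm2]].
    exists (comp m2 m1); split; [auto|]. unfold comp; rewrite Hm1; exact Hm2. }
  split.
  - intros w g Gg.
    destruct (Step3 w (g w)) as [m [Nm Hm]].
    destruct (HNi m Nm) as [m' [Nm' [Hmm' Hm'm]]].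
    exists m, (comp m' g). split; [auto|split; [apply HGc; auto|split]].
    + unfold comp; rewrite <- Hm; apply Hm'm.
    + intro z; unfold comp; rewrite Hmm'; reflexivity.
  - intro Hab.
    destruct Hnt as [x1 [y1 [Hxy Hsxy]]].
    destruct (Step3 x1 y1) as [a [Na Ha]].
    apply Hxy. rewrite <- Ha. symmetry.
    apply (Hbf a (HNG a Na)).
    intro z. destruct (Step3 x1 z) as [c [Nc Hc]]. subst z.
    rewrite (Hab a c Na Nc), Ha.
    apply (proj1 (Hinv c (HNG c Nc) y1 x1)). auto.
Qed.
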